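(* Let $\tau>0$ and let $\tilde N^E_3,\tilde N^A_3\in\mathbb{C}^{n_3,n_3}$ be nilpotent matrices that commute. Consider the equation $\tilde N^E_3\dot x_3(t)=\tilde N^A_3x_3(t)+x_3(t-\tau)+\tilde f_3(t)$ for $t\in[0,\infty)$, where $\tilde f_3$ is sufficiently smooth. Then this equation has the unique solution $$x_3(t)=-\sum_{i=0}^{n_3-1}\left(\tilde N^E_3\tfrac{d}{dt}-\tilde N^A_3\right)^i\tilde f_3\big(t+(i+1)\tau\big)\quad\text{for all }t\in[-\tau,\infty).$$ *)

(* Defs.v *)
From HB Require Import structures.
From mathcomp Require Import all_boot all_order all_algebra.
From mathcomp Require Import all_classical all_reals all_analysis.
From mathcomp Require Import complex.

Set Implicit Arguments.
Unset Strict Implicit.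
Unset Printing Implicit Defensive.

Import Order.TTheory GRing.Theory Num.Theory.
Import numFieldNormedType.Exports.
Local Open Scope ring_scope.
Local Open Scope classical_set_scope.


Definition mx_nilpotent (R : realType) (n : nat) (A : 'M[R[i]]_n) : Prop := exists k : nat, A ^+ k = 0.

Definition cderivable (R : realType) (n : nat) (g : R -> 'cV[R[i]]_n) (t : R) : Prop :=
  forall (i : 'I_n) (j : 'I_1),
    derivable (fun s : R => complex.Re (g s i j)) t 1 /\
    derivable (fun s : R => complex.Im (g s i j)) t 1.

Definition cderive (R : realType) (n : nat) (g : R -> 'cV[R[i]]_n) : R -> 'cV[R[i]]_n :=
  fun t => \matrix_(i < n, j < 1)
    Complex ((fun s : R => complex.Re (g s i j))^`() t) ((fun s : R => complex.Im (g s i j))^`() t).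

(* "Sufficiently smooth": infinitely differentiable on R. *)
Definition csmooth (R : realType) (n : nat) (g : R -> 'cV[R[i]]_n) : Prop :=
  forall (k : nat) (t : R), cderivable (iter k (@cderive R n) g) t.

Definition Dop (R : realType) (n : nat) (NE NA : 'M[R[i]]_n) (g : R -> 'cV[R[i]]_n) :
  R -> 'cV[R[i]]_n :=
  fun t => NE *m cderive g t - NA *m g t.

(* d is the derivative of y at t, taken within the half line [0, oo)
   (i.e. one-sided at t = 0), componentwise on real and imaginary parts. *)
Definition has_hderiv (R : realType) (n : nat) (y : R -> 'cV[R[i]]_n) (t : R)
  (d : 'cV[R[i]]_n) : Prop :=
  forall (i : 'I_n) (j : 'I_1),
    ((fun h : R => h^-1 * (complex.Re (y (t + h) i j) - complex.Re (y t i j)))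
        @ within (fun h : R => 0 <= t + h) ((0 : R)^')
      --> complex.Re (d i j)) /\
    ((fun h : R => h^-1 * (complex.Im (y (t + h) i j) - complex.Im (y t i j)))
        @ within (fun h : R => 0 <= t + h) ((0 : R)^')
      --> complex.Im (d i j)).

Definition is_solution (R : realType) (n : nat) (NE NA : 'M[R[i]]_n) (tau : R)
  (f y : R -> 'cV[R[i]]_n) : Prop :=
  forall t : R, 0 <= t ->
    exists d : 'cV[R[i]]_n, has_hderiv y t d /\
      NE *m d = NA *m y t + y (t - tau) + f t.

(* Main.v *)
Require Import Defs.
From HB Require Import structures.
From mathcomp Require Import all_boot all_order all_algebra.
From mathcomp Require Import all_classical all_reals all_analysis.
From mathcomp Require Import complex.
From mathcomp Require Import zify.
Import Order.TTheory GRing.Theory Num.Theory.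
Import numFieldNormedType.Exports.
Local Open Scope ring_scope.
Local Open Scope classical_set_scope.

Lemma zm (V : zmodType) (a b c a' b' : V) : (a - b - c) - (a' - b' - c) = (a - a') - (b - b').
Proof. rewrite !opprB addrAC -!addrA (addrC (- a')) (addrCA c) addNKr (addrC b') addrCA (addrC (- b)). by rewrite -!addrA. Qed.

Lemma solve_mid (V : zmodType) (u v w e : V) : e = u + v + w -> v = e - u - w.
Proof. by move=> ->; rewrite addrAC addrK (addrC u) addrK. Qed.

Section S.
Variable C : numFieldType.
Variable n : nat.
Variables NE NA : 'M[C]_n.
Hypothesis hE : exists k, NE ^+ k = 0.
Hypothesis hA : exists k, NA ^+ k = 0.
Hypothesis hc : NE * NA = NA * NE.

Lemma mxMn_entry (M : 'M[C]_n) c a b : (M *+ c) a b = M a b *+ c.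
Proof. by elim: c => [|c IH]; rewrite ?mulr0n ?mxE // !mulrS mxE IH. Qed.

Lemma expr_zero_le (M : 'M[C]_n) k m : M ^+ k = 0 -> (k <= m)%N -> M ^+ m = 0.
Proof. by move=> Mk km; rewrite -(subnK km) exprD Mk mulr0. Qed.

Lemma exprZmx (s : C) (M : 'M[C]_n) k : (s *: M) ^+ k = s ^+ k *: M ^+ k.
Proof.
elim: k => [|k IH]; first by rewrite !expr0 scale1r.
by rewrite !exprS IH -!mulmxE -scalemxAl -scalemxAr scalerA.
Qed.

Lemma lincomb_nilp (s : C) : exists k, (s *: NE + NA) ^+ k = 0.
Proof.
case: hE => p Hp; case: hA => q Hq; exists (p + q)%N.
rewrite exprDn_comm; last by rewrite /GRing.comm -!mulmxE -scalemxAl -scalemxAr !mulmxE hc.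
rewrite big1 // => i _.
case: (leqP q i) => qi.
  by rewrite (@expr_zero_le NA q i Hq qi) mulr0 mul0rn.
rewrite exprZmx (@expr_zero_le NE p (p + q - i) Hp) ?scaler0 ?mul0r ?mul0rn //.
lia.
Qed.

Lemma nilp_dim (A : 'M[C]_n) k : A ^+ k = 0 -> A ^+ n = 0.
Proof.
case: n A => [|n'] A Ak; first by rewrite [LHS]flatmx0 [RHS]flatmx0.
have : mxminpoly A %| ('X - 0%:P) ^+ k.
  by apply/mxminpoly_minP; rewrite subr0 rmorphXn /= horner_mx_X.
case/dvdp_exp_XsubCP => j jk hj.
have hA' : horner_mx A (('X - 0%:P) ^+ j) = 0.
  by apply/mxminpoly_minP; rewrite (eqp_dvdl _ hj) dvdpp.
have jn : (j <= n'.+1)%N.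
  have := dvdp_leq (monic_neq0 (char_poly_monic A)) (mxminpoly_dvd_char A).
  by rewrite (eqp_size hj) size_char_poly subr0 size_polyXn.
move: hA'; rewrite subr0 rmorphXn /= horner_mx_X => hA'.
by rewrite -[in X in A ^+ X](subnK jn) exprD hA' mulr0.
Qed.

Lemma monos_top (i : nat) : (i <= n)%N -> NE ^+ i * NA ^+ (n - i) = 0.
Proof.
move=> iN.
have H s : \sum_(j < n.+1) s ^+ j *: (NA ^+ (n - j) * NE ^+ j *+ 'C(n, j)) = 0.
  have [k Hk] := lincomb_nilp s.
  have := nilp_dim _ _ Hk; rewrite addrC exprDn_comm; last first.
    by rewrite /GRing.comm -!mulmxE -!scalemxAl -!scalemxAr !mulmxE hc.
  move=> {2}<-; apply: eq_bigr => j _.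
  by rewrite exprZmx -mulmxE -scalemxAr mulmxE scalerMnr.
apply/matrixP => a b; rewrite [RHS]mxE.
pose p := \poly_(j < n.+1) ((NA ^+ (n - j) * NE ^+ j) a b *+ 'C(n, j)).
suff p0 : p = 0.
  have := congr1 (fun q : {poly C} => q`_i) p0.
  rewrite coef_poly ltnS iN coef0 => /eqP; rewrite mulrn_eq0.
  rewrite eqn0Ngt bin_gt0 iN /= => /eqP.
  have -> : NA ^+ (n - i) * NE ^+ i = NE ^+ i * NA ^+ (n - i) by apply: commrX; apply: commr_sym; apply: commrX.
  done.
apply: (@roots_geq_poly_eq0 _ p [seq (m%:R : C) | m <- iota 0 n.+1]).
- apply/allP => x /mapP [m _ ->]; rewrite /root horner_poly.
  have := congr1 (fun M : 'M[C]_n => M a b) (H m%:R).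
  rewrite summxE mxE => h; apply/eqP; apply: (etrans _ h); apply: eq_bigr => j _.
  rewrite [RHS]mxE mulrC; congr (_ * _).
  elim: ('C(n, j)) => [|c IH]; first by rewrite !mulr0n mxE.
  by rewrite !mulrS [RHS]mxE -IH -mulmxE mxE.
- by rewrite map_inj_uniq ?iota_uniq // => x y /eqP; rewrite eqr_nat => /eqP.
- by rewrite size_map size_iota size_poly.
Qed.
Lemma monos_zero a b : (n <= a + b)%N -> NE ^+ a * NA ^+ b = 0.
Proof.
move=> hab; pose i := minn a n.
have i_n : (i <= n)%N by rewrite geq_minr.
have ia : (i <= a)%N by rewrite geq_minl.
have nib : (n - i <= b)%N by rewrite /i; lia.
by rewrite -(subnK ia) -(subnKC nib) !exprD -mulrA (mulrA (NE ^+ i)) monos_top // mul0r mulr0.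
Qed.
End S.

Section An.
Context {R : realType}.
Local Notation C := R[i].
Local Notation Re := (@complex.Re R).
Local Notation Im := (@complex.Im R).

Lemma ReD (x y : C) : Re (x + y) = Re x + Re y. Proof. by case: x => ? ?; case: y => ? ?. Qed.
Lemma ImD (x y : C) : Im (x + y) = Im x + Im y. Proof. by case: x => ? ?; case: y => ? ?. Qed.
Lemma ReN (x : C) : Re (- x) = - Re x. Proof. by case: x => ? ?. Qed.
Lemma ImN (x : C) : Im (- x) = - Im x. Proof. by case: x => ? ?. Qed.
Lemma ReM (x y : C) : Re (x * y) = Re x * Re y - Im x * Im y. Proof. by case: x => ? ?; case: y => ? ?. Qed.
Lemma ImM (x y : C) : Im (x * y) = Re x * Im y + Im x * Re y. Proof. by case: x => ? ?; case: y => ? ?. Qed.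
Lemma Re0 : Re (0 : C) = 0. Proof. by []. Qed.
Lemma Im0 : Im (0 : C) = 0. Proof. by []. Qed.

Definition ccvg (F : set_system R) (phi : R -> C) (l : C) :=
  (fun h => Re (phi h)) @ F --> Re l /\ (fun h => Im (phi h)) @ F --> Im l.

Section F.
Variable F : set_system R.
Context {FF : Filter F}.

Lemma ccvgD phi psi a b : ccvg F phi a -> ccvg F psi b ->
  ccvg F (fun h => phi h + psi h) (a + b).
Proof.
move=> [h1 h2] [h3 h4]; split.
  rewrite ReD; under eq_fun do rewrite ReD; exact: cvgD.
rewrite ImD; under eq_fun do rewrite ImD; exact: cvgD.
Qed.

Lemma ccvgN phi a : ccvg F phi a -> ccvg F (fun h => - phi h) (- a).
Proof.
move=> [h1 h2]; split.
  rewrite ReN; under eq_fun do rewrite ReN; exact: cvgN.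
rewrite ImN; under eq_fun do rewrite ImN; exact: cvgN.
Qed.

Lemma ccvgMl c phi a : ccvg F phi a -> ccvg F (fun h => c * phi h) (c * a).
Proof.
move=> [h1 h2]; split.
  rewrite ReM; under eq_fun do rewrite ReM.
  by apply: cvgB; apply: cvgMl_tmp.
rewrite ImM; under eq_fun do rewrite ImM.
by apply: cvgD; apply: cvgMl_tmp.
Qed.

Lemma ccvg_cst c : ccvg F (fun _ => c) c.
Proof. by split; apply: cvg_cst. Qed.

Lemma ccvg_sum (I : Type) (r : seq I) (phi : I -> R -> C) (a : I -> C) :
  (forall k, ccvg F (phi k) (a k)) ->
  ccvg F (fun h => \sum_(k <- r) phi k h) (\sum_(k <- r) a k).
Proof.
move=> H; elim: r => [|k r IH].
  rewrite big_nil; under eq_fun do rewrite big_nil; exact: ccvg_cst.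
rewrite big_cons; under eq_fun do rewrite big_cons; exact: ccvgD.
Qed.
End F.

Context {n : nat}.
Implicit Types (g : R -> 'cV[C]_n).

Definition qC g t i j := fun h : R => real_complex R (h^-1) * (g (t + h) i j - g t i j).
Definition QQ (F : set_system R) g t (d : 'cV[C]_n) :=
  forall i j, ccvg F (qC g t i j) (d i j).

Lemma Re_qC g t i j h :
  Re (qC g t i j h) = h^-1 * (Re (g (t + h) i j) - Re (g t i j)).
Proof. by rewrite /qC ReM /= mul0r subr0 ReD ReN. Qed.
Lemma Im_qC g t i j h :
  Im (qC g t i j h) = h^-1 * (Im (g (t + h) i j) - Im (g t i j)).
Proof. by rewrite /qC ImM /= mul0r addr0 ImD ImN. Qed.

Section F2.
Variable F : set_system R.
Context {FF : Filter F}.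

Lemma QQ_mul g t d (M : 'M[C]_n) : QQ F g t d ->
  QQ F (fun s => M *m g s) t (M *m d).
Proof.
move=> H i j.
have -> : qC (fun s => M *m g s) t i j = fun h => \sum_(k <- index_enum 'I_n) M i k * qC g t k j h.
  apply: funext => h; rewrite /qC !mxE -sumrB mulr_sumr; apply: eq_bigr => k _.
  by rewrite -mulrBr mulrCA.
rewrite mxE; apply: ccvg_sum => k; exact: ccvgMl.
Qed.

Lemma QQ_add g1 g2 t d1 d2 : QQ F g1 t d1 -> QQ F g2 t d2 ->
  QQ F (fun s => g1 s + g2 s) t (d1 + d2).
Proof.
move=> H1 H2 i j.
have -> : qC (fun s => g1 s + g2 s) t i j = fun h => qC g1 t i j h + qC g2 t i j h.
  apply: funext => h; rewrite /qC !mxE -mulrDr; congr (_ * _).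
  by rewrite opprD addrACA.
rewrite mxE; exact: ccvgD.
Qed.

Lemma QQ_opp g t d : QQ F g t d -> QQ F (fun s => - g s) t (- d).
Proof.
move=> H i j.
have -> : qC (fun s => - g s) t i j = fun h => - qC g t i j h.
  by apply: funext => h; rewrite /qC !mxE -mulrN opprB opprK addrC.
rewrite mxE; exact: ccvgN.
Qed.

Lemma QQ_sum (I : Type) (r : seq I) (G : I -> R -> 'cV[C]_n) t (D : I -> 'cV[C]_n) :
  (forall k, QQ F (G k) t (D k)) ->
  QQ F (fun s => \sum_(k <- r) G k s) t (\sum_(k <- r) D k).
Proof.
move=> H i j.
have -> : qC (fun s => \sum_(k <- r) G k s) t i j = fun h => \sum_(k <- r) qC (G k) t i j h.
  apply: funext => h; rewrite /qC !summxE -sumrB mulr_sumr.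
  by apply: eq_bigr => k _.
rewrite summxE; apply: ccvg_sum => k; exact: H.
Qed.

Lemma QQ_shift g t c d : QQ F g (t + c) d -> QQ F (fun s => g (s + c)) t d.
Proof.
move=> H i j.
have -> : qC (fun s => g (s + c)) t i j = qC g (t + c) i j.
  by apply: funext => h; rewrite /qC addrAC.
exact: H.
Qed.
End F2.

Lemma quot_eq (phi : R -> R) t :
  (fun h : R => h^-1 *: ((phi \o shift t) (h *: (1:R)) - phi t)) =
  (fun h : R => h^-1 * (phi (t + h) - phi t)).
Proof. by apply: funext => h; rewrite /= /shift /= -[h%:A]/(h * 1) mulr1 [h + t]addrC. Qed.

Lemma der_cvg (phi : R -> R) t : derivable phi t 1 ->
  (fun h : R => h^-1 * (phi (t + h) - phi t)) @ 0^' --> phi^`() t.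
Proof.
move=> H; rewrite derive1E /derive -quot_eq; exact: H.
Qed.

Lemma cvg_der (phi : R -> R) t l :
  (fun h : R => h^-1 * (phi (t + h) - phi t)) @ 0^' --> l ->
  derivable phi t 1 /\ phi^`() t = l.
Proof.
move=> H; split.
  by rewrite /derivable quot_eq; apply/cvg_ex; exists l.
rewrite derive1E /derive quot_eq; exact: cvg_lim.
Qed.

Lemma QQ_of_cderivable g t : cderivable g t -> QQ 0^' g t (cderive g t).
Proof.
move=> H i j; have [H1 H2] := H i j; split.
  under eq_fun do rewrite Re_qC.
  rewrite mxE /=; exact: der_cvg.
under eq_fun do rewrite Im_qC.
rewrite mxE /=; exact: der_cvg.
Qed.

Lemma cderive_of_QQ g t d : QQ 0^' g t d -> cderivable g t /\ cderive g t = d.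
Proof.
move=> H; split.
  move=> i j; have [H1 H2] := H i j; split.
    by move: H1; under eq_fun do rewrite Re_qC; case/(cvg_der (fun s => Re (g s i j))).
  by move: H2; under eq_fun do rewrite Im_qC; case/(cvg_der (fun s => Im (g s i j))).
apply/matrixP => i j; rewrite mxE; have [H1 H2] := H i j.
move: H1; under eq_fun do rewrite Re_qC; case/(cvg_der (fun s => Re (g s i j))) => _ ->.
move: H2; under eq_fun do rewrite Im_qC; case/(cvg_der (fun s => Im (g s i j))) => _ ->.
by case: (d i j).
Qed.

Lemma QQ_within g t d (D : set R) : QQ 0^' g t d -> QQ (within D 0^') g t d.
Proof.
move=> H i j; have [H1 H2] := H i j; split.
  exact: cvg_trans (cvg_app _ (cvg_within D)) H1.
exact: cvg_trans (cvg_app _ (cvg_within D)) H2.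
Qed.

Lemma QQ_right g t d : 0 <= t -> QQ (within (fun h : R => 0 <= t + h) 0^') g t d ->
  QQ 0^'+ g t d.
Proof.
move=> t0 H.
have sub : 0^'+ --> within (fun h : R => 0 <= t + h) (0 : R)^'.
  move=> P; rewrite !nbhs_filterE /within /dnbhs /=; rewrite /within /=; apply: (@filterS _ (nbhs (0:R))) => y /= Py ypos.
  apply: Py; first by rewrite gt_eqF.
  by rewrite addr_ge0 // ltW.
move=> i j; have [H1 H2] := H i j; split.
  exact: cvg_trans (cvg_app _ sub) H1.
exact: cvg_trans (cvg_app _ sub) H2.
Qed.

Lemma hderiv_QQ g t d : has_hderiv g t d <-> QQ (within (fun h : R => 0 <= t + h) 0^') g t d.
Proof.
split=> H i j; have [H1 H2] := H i j; split.
- by under eq_fun do rewrite Re_qC.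
- by under eq_fun do rewrite Im_qC.
- by move: H1; under eq_fun do rewrite Re_qC.
- by move: H2; under eq_fun do rewrite Im_qC.
Qed.

Lemma QQ_zero g t d : QQ 0^'+ g t d -> g t = 0 -> (forall h, 0 < h -> g (t + h) = 0) -> d = 0.
Proof.
move=> H gt0 gh0; apply/matrixP => i j; rewrite mxE.
have [H1 H2] := H i j.
have E1 : (fun h => Re (qC g t i j h)) @ 0^'+ --> (0 : R).
  have C0 : (fun _ : R => (0:R)) @ 0^'+ --> (0:R) by apply: cvg_cst.
  apply: cvg_trans C0.
  apply: near_eq_cvg; apply: filterS (nbhs_right_gt 0) => h hpos.
  by rewrite /qC gh0 // gt0 mxE subrr mulr0.
have E2 : (fun h => Im (qC g t i j h)) @ 0^'+ --> (0 : R).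
  have C0 : (fun _ : R => (0:R)) @ 0^'+ --> (0:R) by apply: cvg_cst.
  apply: cvg_trans C0.
  apply: near_eq_cvg; apply: filterS (nbhs_right_gt 0) => h hpos.
  by rewrite /qC gh0 // gt0 mxE subrr mulr0.
have e1 : Re (d i j) = 0.
  by rewrite -(cvg_lim (@norm_hausdorff _ _) H1); apply: cvg_lim E1; exact: norm_hausdorff.
have e2 : Im (d i j) = 0.
  by rewrite -(cvg_lim (@norm_hausdorff _ _) H2); apply: cvg_lim E2; exact: norm_hausdorff.
case: (d i j) e1 e2 => a b e1 e2.
have ea : a = 0 := e1. have eb : b = 0 := e2.
by rewrite ea eb.
Qed.

End An.

Section Main.
Variables (R : realType) (n : nat) (tau : R) (NE NA : 'M[R[i]]_n) (f : R -> 'cV[R[i]]_n).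
Hypotheses (htau : 0 < tau) (hE : mx_nilpotent NE) (hA : mx_nilpotent NA)
  (hc : NE *m NA = NA *m NE) (hf : csmooth f).

Let hc' : GRing.comm NE NA. Proof. by rewrite /GRing.comm -!mulmxE. Qed.

Definition hh a := iter a (@cderive R n) f.
Definition Qk m (M : 'M[R[i]]_n) := forall a b, (n <= a + b + m)%N -> NE ^+ a * NA ^+ b * M = 0.

Lemma Qk0 : Qk 0 1.
Proof. by move=> a b hab; rewrite mulr1 (@monos_zero _ _ NE NA hE hA hc' a b) //; lia. Qed.

Lemma QkE m M : Qk m M -> Qk m.+1 (NE * M).
Proof.
move=> H a b hab; rewrite mulrA -(mulrA _ (NA ^+ b)) -(commrX b hc') mulrA -exprSr.
by apply: H; lia.
Qed.

Lemma QkA m M : Qk m M -> Qk m.+1 (- (NA * M)).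
Proof.
move=> H a b hab; rewrite mulrN mulrA -(mulrA _ (NA ^+ b)) -exprSr H ?oppr0 //; lia.
Qed.

Lemma Qk_top M : Qk n M -> M = 0.
Proof. by move=> H; have := H 0%N 0%N; rewrite !expr0 !mul1r; apply; lia. Qed.

Lemma hh_QQ a s : QQ 0^' (hh a) s (hh a.+1 s).
Proof. exact: QQ_of_cderivable (hf a s). Qed.

Lemma rep_QQ (r : seq ('M[R[i]]_n * nat)) s :
  QQ 0^' (fun u => \sum_(p <- r) p.1 *m hh p.2 u) s (\sum_(p <- r) p.1 *m hh p.2.+1 s).
Proof. by apply: QQ_sum => p; apply: QQ_mul; apply: hh_QQ. Qed.

Lemma rep k : exists r : seq ('M[R[i]]_n * nat),
  (forall p, p \in r -> Qk k p.1) /\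
  iter k (Dop NE NA) f = fun s => \sum_(p <- r) p.1 *m hh p.2 s.
Proof.
elim: k => [|k [r [Hr E]]].
  exists [:: (1, 0%N)]; split.
    by move=> p; rewrite mem_seq1 => /eqP -> /=; exact: Qk0.
  by apply: funext => s; rewrite big_seq1 /= mul1mx.
exists ([seq (NE * p.1, p.2.+1) | p <- r] ++ [seq (- (NA * p.1), p.2) | p <- r]); split.
  move=> p; rewrite mem_cat => /orP [] /mapP [q qr ->] /=.
    exact: QkE (Hr q qr).
  exact: QkA (Hr q qr).
apply: funext => s; rewrite iterS E /Dop.
have [_ ->] := cderive_of_QQ _ _ _ (rep_QQ r s).
rewrite big_cat !big_map /= !mulmx_sumr -sumrN; congr (_ + _).
  by apply: eq_bigr => p _; rewrite mulmxA mulmxE.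
by apply: eq_bigr => p _; rewrite mulmxA mulmxE mulNmx.
Qed.

Lemma iter_top s : iter n (Dop NE NA) f s = 0.
Proof.
have [r [Hr ->]] := rep n.
by rewrite big1_seq // => p /andP [_ /Hr /Qk_top ->]; rewrite mul0mx.
Qed.

Lemma g_QQ k s : QQ 0^' (iter k (Dop NE NA) f) s (cderive (iter k (Dop NE NA) f) s).
Proof.
apply: QQ_of_cderivable; have [r [_ ->]] := rep k.
exact: (cderive_of_QQ _ _ _ (rep_QQ r s)).1.
Qed.

Definition xs := fun t : R =>
    - \sum_(i < n) iter i (Dop NE NA) f (t + (i.+1)%:R * tau).

Lemma xs_sol : is_solution NE NA tau f xs.
Proof.
move=> t t0.
exists (- \sum_(i < n) cderive (iter i (Dop NE NA) f) (t + i.+1%:R * tau)); split.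
  apply/hderiv_QQ; apply: QQ_within; rewrite /xs; apply: QQ_opp.
  apply: (@QQ_sum R n _ _ 'I_n (index_enum 'I_n) (fun (k : 'I_n) s => iter k (Dop NE NA) f (s + k.+1%:R * tau))) => k.
  apply: QQ_shift; exact: g_QQ.
have E1 i u : NE *m cderive (iter i (Dop NE NA) f) u =
    iter i.+1 (Dop NE NA) f u + NA *m iter i (Dop NE NA) f u.
  by rewrite iterS /Dop subrK.
rewrite mulmxN mulmx_sumr; under eq_bigr do rewrite E1.
rewrite big_split /= opprD /xs mulmxN mulmx_sumr.
pose F i := iter i (Dop NE NA) f (t + i%:R * tau).
suff -> : - \sum_(i < n) iter i.+1 (Dop NE NA) f (t + i.+1%:R * tau) =
   - \sum_(i < n) iter i (Dop NE NA) f (t - tau + i.+1%:R * tau) + f t.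
  by rewrite addrC addrA.
have hX : \sum_(i < n) iter i (Dop NE NA) f (t - tau + i.+1%:R * tau) = \sum_(i < n) F i.
  apply: eq_bigr => i _; rewrite /F; congr (iter _ _ _ _).
  by rewrite mulrSr mulrDl mul1r (addrC (i%:R * tau)) addrA subrK.
have hB : \sum_(i < n) iter i.+1 (Dop NE NA) f (t + i.+1%:R * tau) = \sum_(i < n) F i.+1.
  by [].
have h1 := big_ord_recl n (fun i : 'I_n.+1 => F i).
have h2 := big_ord_recr n (fun i : 'I_n.+1 => F i).
rewrite /= in h1 h2.
have Fn : F n = 0 by rewrite /F iter_top.
have F0 : F 0%N = f t by rewrite /F /= mul0r addr0.
rewrite hX hB.
have e1 : \sum_(i < n.+1) F i = F 0%N + \sum_(i < n) F (bump 0 i) by apply: h1.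
have e2 : \sum_(i < n.+1) F i = \sum_(i < n) F i + F n by apply: h2.
rewrite Fn addr0 in e2; rewrite -e2 e1 F0.
have -> : \sum_(i < n) F (bump 0 i) = \sum_(i < n) F i.+1.
  by apply: eq_bigr => i _; rewrite /bump add1n.
by rewrite opprD addrAC addNr add0r.
Qed.

Lemma xs_unique y : is_solution NE NA tau f y -> forall t, - tau <= t -> y t = xs t.
Proof.
move=> soly.
have S m : forall a b, (n <= a + b + m)%N -> forall s, - tau <= s ->
    NE ^+ a * NA ^+ b *m y s = NE ^+ a * NA ^+ b *m xs s.
  elim: m => [|m IH] a b hab s hs.
    by rewrite (@monos_zero _ _ NE NA hE hA hc' a b) ?mul0mx //; lia.
  pose t := s + tau.
  have t0 : 0 <= t by rewrite /t -lerBlDr sub0r.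
  have tt : - tau <= t by apply: le_trans t0; rewrite oppr_le0 ltW.
  have [dy [Hy Ey]] := soly t t0.
  have [dx [Hx Ex]] := xs_sol t t0.
  have ts : t - tau = s by rewrite /t addrK.
  rewrite ts in Ey Ex.
  have ys := solve_mid _ _ _ _ _ Ey; have xs' := solve_mid _ _ _ _ _ Ex.
  apply/eqP; rewrite -subr_eq0 -mulmxBr ys xs'.
  have -> : (NE *m dy - NA *m y t - f t) - (NE *m dx - NA *m xs t - f t) = NE *m (dy - dx) - NA *m (y t - xs t) by rewrite zm !mulmxBr.
  rewrite mulmxBr !mulmxA !mulmxE.
  have eA : NE ^+ a * NA ^+ b * NA = NE ^+ a * NA ^+ b.+1 by rewrite -mulrA -exprSr.
  have eE : NE ^+ a * NA ^+ b * NE = NE ^+ a.+1 * NA ^+ b.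
    by rewrite -mulrA -(commrX b hc') mulrA -exprSr.
  rewrite eA eE.
  have Z2 : NE ^+ a * NA ^+ b.+1 *m (y t - xs t) = 0.
    by rewrite mulmxBr IH ?subrr //; lia.
  have Z1 : NE ^+ a.+1 * NA ^+ b *m (dy - dx) = 0.
    apply: (@QQ_zero R n (fun u => NE ^+ a.+1 * NA ^+ b *m (y u - xs u)) t).
    - apply: QQ_right t0 _; apply: QQ_mul; apply: QQ_add; first exact/hderiv_QQ.
      by apply: QQ_opp; apply/hderiv_QQ.
    - by rewrite /= mulmxBr IH ?subrr //; lia.
    - move=> h hpos; rewrite /= mulmxBr IH ?subrr //; first lia.
      by apply: le_trans tt _; rewrite lerDl ltW.
  by rewrite -!mulmxE Z1 Z2 subrr.
move=> t ht; have := S n 0%N 0%N _ t ht; rewrite !expr0 mul1r !mul1mx; apply; lia.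
Qed.

Lemma main_sec : is_solution NE NA tau f xs /\
  (forall y, is_solution NE NA tau f y -> forall t, - tau <= t -> y t = xs t).
Proof. by split; [exact: xs_sol | exact: xs_unique]. Qed.

End Main.

Theorem lemma4 (R : realType) (n3 : nat) (tau : R) (NE NA : 'M[R[i]]_n3)
    (f : R -> 'cV[R[i]]_n3) :
  0 < tau -> mx_nilpotent NE -> mx_nilpotent NA -> NE *m NA = NA *m NE ->
  csmooth f ->
  let x := fun t : R =>
    - \sum_(i < n3) iter i (Dop NE NA) f (t + (i.+1)%:R * tau) in
  is_solution NE NA tau f x /\
  (forall y : R -> 'cV[R[i]]_n3, is_solution NE NA tau f y ->
     forall t : R, - tau <= t -> y t = x t).
Proof.
move=> htau hE hA hc hf x.
exact: main_sec.
Qed.
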